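(* Let $\{x^k\}$ be generated by the ABP algorithm described in the context and assume (A1)–(A6), (A7') and (A8) below: (A1) $\mathcal F$ is continuously differentiable; (A2) $C$ and $Q$ are nonempty, closed and convex, and $z_i^*>-\infty$ for each $i$; (A3) each $f_i$ is convex; (A4) $\Omega\neq\emptyset$; (A5) $\lambda_k>0$, $\sum_k\lambda_k=\infty$, $\sum_k\lambda_k^2<\infty$; (A6) $\underline\alpha\le\alpha_k\le\bar\alpha$, $\underline\beta\le\beta_k\le\bar\beta$, $\underline\gamma\le\gamma_k\le\bar\gamma$ for all $k$, for constants $0<\underline\alpha\le\bar\alpha$, $0<\underline\beta\le\bar\beta$, $0<\underline\gamma\le\bar\gamma$; (A7') $\sigma:=\varphi^*-\varphi_{\mathrm{lb}}\le\varepsilon_0$ for a known constant $\varepsilon_0\ge0$; (A8) $\sup_k\|x^k\|\le B<\infty$. Let $\bar M<\infty$ be a uniform bound $\|d^k\|\le\bar M$ for all $k$ (which exists under these assumptions), $\bar\eta:=\max(\mu,\bar M)$ and $C_*:=\bar\alpha\bar\eta/\mu$. Then there exist a subsequence $\{k_j\}$ and a constant $\ell_*\in[0,C_*\varepsilon_0]$ with $\Phi_{k_j}\to\ell_*$ such that every cluster point $\hat x$ of $\{x^{k_j}\}$ satisfies: (i) $H(\hat x)\le \ell_*/\underline\beta\le C_*\varepsilon_0/\underline\beta$, i.e. $\mathrm{dist}(\hat x,C)\le\sqrt{2C_*\varepsilon_0/\underline\beta}$; (ii) $G(\hat x)\le\ell_*/\underline\gamma\le C_*\varepsilon_0/\underline\gamma$,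 i.e. $\mathrm{dist}(\mathcal F(\hat x),Q^+)\le\sqrt{2C_*\varepsilon_0/\underline\gamma}$; (iii) $\varphi(\hat x)\le\varphi_{\mathrm{lb}}+\ell_*/\underline\alpha\le\varphi^*+C_*\varepsilon_0/\underline\alpha$. Moreover, when $\varepsilon_0=0$, one has $\ell_*=0$, all three bounds vanish, and $\hat x\in\Omega$.
   Context: Let $n,m\ge1$, $\mathcal F=(f_1,\dots,f_m)\colon\mathbb R^n\to\mathbb R^m$, $C\subset\mathbb R^n$, $Q\subset\mathbb R^m$, and $Q^+:=Q-\mathbb R^m_+=\{y-u:y\in Q,u\in\mathbb R^m_+\}$. $P_S$ denotes Euclidean projection onto a nonempty closed convex set $S$. Let $z_i^*:=\inf_{x\in C}f_i(x)$, fix $r\in\mathbb R^m$ with all $r_i>0$, $\sum_ir_i=1$. Define $\varphi(x):=\max_i r_i(f_i(x)-z_i^* )$, $H(x):=\tfrac12\mathrm{dist}^2(x,C)$, $G(x):=\tfrac12\mathrm{dist}^2(\mathcal F(x),Q^+)$, $\mathcal S:=\{x:H(x)=0,G(x)=0\}$, $\varphi^*:=\inf_{\mathcal S}\varphi$, $\Omega:=\{x\in\mathcal S:\varphi(x)=\varphi^*\}$, $\varphi_{\mathrm{lb}}:=\inf_{x\in C}\varphi(x)$. ABP algorithm: given $x^0\in\mathbb R^n$, $\mu>0$, positive sequences $\{\alpha_k\},\{\beta_k\},\{\gamma_k\},\{\lambda_k\}$, for each $k$: $p^k:=P_{Q^+}(\mathcal F(x^k))$, $\rho^k:=\mathcal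 F(x^k)-p^k$, $z^k:=x^k-P_C(x^k)$, $v^k:=J_{\mathcal F}(x^k)^T\rho^k$, $w^k:=r_{i^*}\nabla f_{i^*}(x^k)$ for an arbitrary $i^*\in\arg\max_ir_i(f_i(x^k)-z_i^* )$, $\Delta_k:=\varphi(x^k)-\varphi_{\mathrm{lb}}$, $d^k:=\alpha_k\mathbf 1_{\{\Delta_k\ge0\}}w^k+\beta_kz^k+\gamma_kv^k$, $\eta_k:=\max(\mu,\|d^k\|)$, $x^{k+1}:=x^k-(\lambda_k/\eta_k)d^k$. Notation: $H_k:=H(x^k)$, $G_k:=G(x^k)$, $\Delta_k^+:=\max(\Delta_k,0)$, $\Phi_k:=\alpha_k\Delta_k^++\beta_kH_k+\gamma_kG_k$. *)

(* Defs.v *)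
(* R : realType, vectors of R^n are row vectors 'rV[R]_n
   (whose canonical topology is the product = Euclidean topology). *)
From HB Require Import structures.
From mathcomp Require Import all_boot all_order all_algebra.
From mathcomp Require Import all_classical all_reals all_analysis.
Set Implicit Arguments. Unset Strict Implicit. Unset Printing Implicit Defensive.
Import Order.TTheory GRing.Theory Num.Theory.
Import numFieldNormedType.Exports.
Local Open Scope classical_set_scope.
Local Open Scope ring_scope.

Section ABP.
Variable R : realType.

Definition eucdot (n : nat) (u v : 'rV[R]_n) : R := \sum_(j < n) u 0 j * v 0 j.
Definition eucnorm (n : nat) (v : 'rV[R]_n) : R := Num.sqrt (eucdot v v).

Definition setdist (n : nat) (x : 'rV[R]_n) (S : set 'rV[R]_n) : R :=
  inf [set eucnorm (x - y) | y in S].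

Definition is_proj (n : nat) (S : set 'rV[R]_n) (x p : 'rV[R]_n) : Prop :=
  S p /\ forall y, S y -> eucnorm (x - p) <= eucnorm (x - y).

Definition convex_set_rV (n : nat) (S : set 'rV[R]_n) : Prop :=
  forall x y (t : R), S x -> S y -> 0 <= t <= 1 -> S (t *: x + (1 - t) *: y).

Definition grad (n : nat) (f : 'rV[R]_n -> R) (x : 'rV[R]_n) : 'rV[R]_n :=
  \row_(j < n) ('d f x) (delta_mx 0 j).

Definition C1 (n : nat) (f : 'rV[R]_n -> R) : Prop :=
  (forall x, differentiable f x) /\ continuous (grad f).

Definition Fvec (n m : nat) (f : 'I_m -> 'rV[R]_n -> R) (x : 'rV[R]_n) : 'rV[R]_m :=
  \row_(i < m) f i x.

Definition JT (n m : nat) (f : 'I_m -> 'rV[R]_n -> R) (x : 'rV[R]_n) (rho : 'rV[R]_m)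
  : 'rV[R]_n := \sum_(i < m) rho 0 i *: grad (f i) x.

Definition Qplus (m : nat) (Q : set 'rV[R]_m) : set 'rV[R]_m :=
  [set z | exists (y u : 'rV[R]_m), Q y /\ (forall i, 0 <= u 0 i) /\ z = y - u].

Variables (n m : nat) (f : 'I_m -> 'rV[R]_n -> R) (C : set 'rV[R]_n)
  (Q : set 'rV[R]_m) (r : 'I_m -> R).

Definition zstar (i : 'I_m) : R := inf [set f i x | x in C].
(* max over the finite nonempty index set (m >= 1) *)
Definition phi (x : 'rV[R]_n) : R :=
  sup [set r i * (f i x - zstar i) | i in [set: 'I_m]].
Definition Hf (x : 'rV[R]_n) : R := (setdist x C) ^+ 2 / 2.
Definition Gf (x : 'rV[R]_n) : R := (setdist (Fvec f x) (Qplus Q)) ^+ 2 / 2.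
Definition Sfeas : set 'rV[R]_n := [set x | Hf x = 0 /\ Gf x = 0].
Definition phistar : R := inf [set phi x | x in Sfeas].
Definition Omega : set 'rV[R]_n := [set x | Sfeas x /\ phi x = phistar].
Definition philb : R := inf [set phi x | x in C].

End ABP.

(* Main.v *)
Require Import Defs.
From HB Require Import structures.
From mathcomp Require Import all_boot all_order all_algebra.
From mathcomp Require Import all_classical all_reals all_analysis.
From mathcomp Require Import ring lra.
Import Order.TTheory GRing.Theory Num.Theory.
Import numFieldNormedType.Exports.
Local Open Scope classical_set_scope.
Local Open Scope ring_scope.
Set Implicit Arguments. Unset Strict Implicit. Unset Printing Implicit Defensive.
Section Euc.
Variable R : realType.
Implicit Types (a b : R).

Lemma dotC n (u v : 'rV[R]_n) : eucdot u v = eucdot v u.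
Proof. by apply: eq_bigr => j _; rewrite mulrC. Qed.
Lemma dotDl n (u v w : 'rV[R]_n) : eucdot (u + v) w = eucdot u w + eucdot v w.
Proof. by rewrite /eucdot -big_split /=; apply: eq_bigr => j _; rewrite mxE mulrDl. Qed.
Lemma dotZl n a (u w : 'rV[R]_n) : eucdot (a *: u) w = a * eucdot u w.
Proof. by rewrite /eucdot mulr_sumr; apply: eq_bigr => j _; rewrite mxE mulrA. Qed.
Lemma dotNl n (u w : 'rV[R]_n) : eucdot (- u) w = - eucdot u w.
Proof. by rewrite -scaleN1r dotZl mulN1r. Qed.
Lemma dotBl n (u v w : 'rV[R]_n) : eucdot (u - v) w = eucdot u w - eucdot v w.
Proof. by rewrite dotDl dotNl. Qed.
Lemma dotDr n (u v w : 'rV[R]_n) : eucdot w (u + v) = eucdot w u + eucdot w v.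
Proof. by rewrite dotC dotDl !(dotC w). Qed.
Lemma dotZr n a (u w : 'rV[R]_n) : eucdot w (a *: u) = a * eucdot w u.
Proof. by rewrite dotC dotZl dotC. Qed.
Lemma dotBr n (u v w : 'rV[R]_n) : eucdot w (u - v) = eucdot w u - eucdot w v.
Proof. by rewrite dotC dotBl !(dotC w). Qed.
Lemma dot_suml n (I : Type) (s : seq I) (F : I -> 'rV[R]_n) w :
  eucdot (\sum_(i <- s) F i) w = \sum_(i <- s) eucdot (F i) w.
Proof.
elim: s => [|i s IH]; first by rewrite !big_nil /eucdot big1 // => j _; rewrite mxE mul0r.
by rewrite !big_cons dotDl IH.
Qed.
Lemma dot_ge0 n (u : 'rV[R]_n) : 0 <= eucdot u u.
Proof. by apply: sumr_ge0 => j _; rewrite -expr2 sqr_ge0. Qed.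
Lemma norm_ge0 n (u : 'rV[R]_n) : 0 <= eucnorm u.
Proof. exact: sqrtr_ge0. Qed.
Lemma normE n (u : 'rV[R]_n) : eucnorm u ^+ 2 = eucdot u u.
Proof. by rewrite sqr_sqrtr // dot_ge0. Qed.
Lemma norm_le n (u v : 'rV[R]_n) : eucnorm u <= eucnorm v -> eucdot u u <= eucdot v v.
Proof. by rewrite /eucnorm ler_sqrt // dot_ge0. Qed.
Lemma norm_lt n (u v : 'rV[R]_n) : eucnorm u < eucnorm v -> eucdot u u < eucdot v v.
Proof.
move=> h; have hv : 0 < eucdot v v.
  by rewrite lt_def dot_ge0 andbT; apply/eqP => e; move: h; rewrite /eucnorm e sqrtr0 ltNge sqrtr_ge0.
by move: h; rewrite /eucnorm ltr_sqrt.
Qed.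

Lemma dot_expand n (u v : 'rV[R]_n) a :
  eucdot (u - a *: v) (u - a *: v) = eucdot u u - 2 * a * eucdot u v + a ^+ 2 * eucdot v v.
Proof. rewrite !(dotBl, dotBr, dotZl, dotZr) (dotC v u); ring. Qed.

Lemma CS n (u v : 'rV[R]_n) : eucdot u v ^+ 2 <= eucdot u u * eucdot v v.
Proof.
set A := eucdot u u; set B := eucdot u v; set Cc := eucdot v v.
have H t : 0 <= A - 2 * t * B + t ^+ 2 * Cc by rewrite -dot_expand dot_ge0.
have A0 : 0 <= A by apply: dot_ge0.
have C0 : 0 <= Cc by apply: dot_ge0.
have [Cz|Cp] := eqVneq Cc 0.
  have [Bz|Bn] := eqVneq B 0; first by rewrite Bz Cz expr0n /= mulr0.
  have := H ((A + 1) / (2 * B)); rewrite Cz mulr0 addr0.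
  have -> : 2 * ((A + 1) / (2 * B)) * B = A + 1 by field; rewrite Bn.
  lra.
have Cp' : 0 < Cc by rewrite lt_def Cp C0.
have := H (B / Cc).
have -> : A - 2 * (B / Cc) * B + (B / Cc) ^+ 2 * Cc = (A * Cc - B ^+ 2) / Cc by field; rewrite Cp.
rewrite pmulr_lge0 ?invr_gt0 //; lra.
Qed.

Lemma CSabs n (u v : 'rV[R]_n) : `|eucdot u v| <= eucnorm u * eucnorm v.
Proof.
rewrite -sqrtr_sqr /eucnorm -sqrtrM ?dot_ge0 // ler_wsqrtr //; exact: CS.
Qed.

Lemma CSle n (u v : 'rV[R]_n) : eucdot u v <= eucnorm u * eucnorm v.
Proof. exact: le_trans (ler_norm _) (CSabs _ _). Qed.

Lemma norm_triangle n (u v : 'rV[R]_n) : eucnorm (u + v) <= eucnorm u + eucnorm v.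
Proof.
rewrite -(ler_pXn2r (n:=2)) //; last by rewrite nnegrE addr_ge0 // norm_ge0.
  2: by rewrite nnegrE norm_ge0.
rewrite !normE dotDl !dotDr (dotC v u) sqrrD !normE.
have := CSle u v; lra.
Qed.

Lemma normB_sym n (u v : 'rV[R]_n) : eucnorm (u - v) = eucnorm (v - u).
Proof. by rewrite -opprB /eucnorm dotNl dotC dotNl opprK. Qed.

End Euc.
Section Dist.
Variable R : realType.

Lemma norm0 n : eucnorm (0 : 'rV[R]_n) = 0.
Proof. by rewrite /eucnorm /eucdot big1 ?sqrtr0 // => j _; rewrite mxE mul0r. Qed.

Lemma setdist_lbound n (x : 'rV[R]_n) S : has_lbound [set eucnorm (x - y) | y in S].
Proof. by exists 0 => _ [y _ <-]; exact: norm_ge0. Qed.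

Lemma setdist_ge0 n (x : 'rV[R]_n) S : S !=set0 -> 0 <= setdist x S.
Proof.
move=> [y Sy]; apply: lb_le_inf; first by exists (eucnorm (x - y)), y.
by move=> _ [z _ <-]; exact: norm_ge0.
Qed.

Lemma setdist_le n (x : 'rV[R]_n) S y : S y -> setdist x S <= eucnorm (x - y).
Proof. by move=> Sy; apply: (ge_inf (setdist_lbound x S)); exists y. Qed.

Lemma setdist_proj n S (x p : 'rV[R]_n) : is_proj S x p -> setdist x S = eucnorm (x - p).
Proof.
move=> [Sp hp]; apply/le_anti; rewrite setdist_le //=.
apply: lb_le_inf; first by exists (eucnorm (x - p)), p.
by move=> _ [y Sy <-]; exact: hp.
Qed.

Lemma setdist_mem n S (y : 'rV[R]_n) : S y -> setdist y S = 0.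
Proof.
move=> Sy; apply/le_anti; rewrite setdist_ge0; last by exists y.
by rewrite andbT; apply: le_trans (setdist_le y Sy) _; rewrite subrr norm0.
Qed.

Lemma setdist_lip n S (x y : 'rV[R]_n) : S !=set0 ->
  setdist x S <= eucnorm (x - y) + setdist y S.
Proof.
move=> [s0 Ss0]; rewrite -lerBlDl; apply: lb_le_inf; first by exists (eucnorm (y - s0)), s0.
move=> _ [s Ss <-]; rewrite lerBlDl; apply: le_trans (setdist_le x Ss) _.
have -> : x - s = (x - y) + (y - s) by apply/rowP => j; rewrite !mxE; ring.
exact: norm_triangle.
Qed.

Lemma setdist_abs n S (x y : 'rV[R]_n) : S !=set0 ->
  `|setdist x S - setdist y S| <= eucnorm (x - y).
Proof.
move=> S0; have h1 := setdist_lip x y S0; have h2 := setdist_lip y x S0.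
rewrite normB_sym in h2; rewrite ler_norml; apply/andP; split; lra.
Qed.

Lemma setdist0_approx n S (x : 'rV[R]_n) e : S !=set0 -> setdist x S = 0 -> 0 < e ->
  exists2 y, S y & eucnorm (x - y) < e.
Proof.
move=> [s Ss] h e0.
have := @inf_lt _ [set eucnorm (x - y) | y in S] e.
rewrite -/(setdist x S) h => /(_ _ e0) [].
  by exists (eucnorm (x - s)), s.
by move=> _ [y Sy <-] lt; exists y.
Qed.

Lemma proj_VI n S (x p y : 'rV[R]_n) : convex_set_rV S -> is_proj S x p -> S y ->
  eucdot (x - p) (y - p) <= 0.
Proof.
move=> cS [Sp hp] Sy.
set B := eucdot (x - p) (y - p); set Cc := eucdot (y - p) (y - p).
have H t : 0 < t -> t <= 1 -> 2 * B <= t * Cc.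
  move=> t0 t1.
  have Sq := cS y p t Sy Sp; rewrite (ltW t0) t1 in Sq.
  have := norm_le (hp _ (Sq isT)).
  have -> : x - (t *: y + (1 - t) *: p) = (x - p) - t *: (y - p)
    by apply/rowP => j; rewrite !mxE; ring.
  rewrite dot_expand -/B -/Cc => h.
  have : 0 <= t * (t * Cc - 2 * B) by rewrite mulrBr mulrA -expr2; lra.
  by rewrite pmulr_rge0 // subr_ge0.
have C0 : 0 <= Cc := dot_ge0 _.
rewrite leNgt; apply/negP => Bp.
have CB : 0 < Cc + B by lra.
have t0 : 0 < B / (Cc + B) by rewrite divr_gt0.
have t1 : B / (Cc + B) <= 1 by rewrite ler_pdivrMr // mul1r; lra.
have := H _ t0 t1.
have : B / (Cc + B) * Cc <= B.
  rewrite mulrAC ler_pdivrMr // ler_pM2l //; lra.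
lra.
Qed.

Lemma proj_VI_cl n S (x p y : 'rV[R]_n) : convex_set_rV S -> is_proj S x p ->
  setdist y S = 0 -> eucdot (x - p) (y - p) <= 0.
Proof.
move=> cS hP hy; have S0 : S !=set0 by exists p; case: hP.
apply/ler_addgt0Pr => e e0; rewrite add0r.
have N0 := norm_ge0 (x - p).
have e1 : 0 < e / (eucnorm (x - p) + 1) by rewrite divr_gt0 //; lra.
have [s Ss hs] := setdist0_approx S0 hy e1.
have -> : y - p = (s - p) + (y - s) by apply/rowP => j; rewrite !mxE; ring.
rewrite dotDr.
have h1 := proj_VI cS hP Ss.
have h2 := CSle (x - p) (y - s).
have h3 : eucnorm (x - p) * eucnorm (y - s) <= e.
  apply: le_trans (_ : eucnorm (x - p) * (e / (eucnorm (x - p) + 1)) <= e).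
    by rewrite ler_wpM2l // ltW.
  rewrite mulrA ler_pdivrMr; last lra.
  rewrite mulrC ler_pM2l //; lra.
lra.
Qed.

Lemma mxnorm_le_euc n (v : 'rV[R]_n) : `|v| <= eucnorm v.
Proof.
rewrite [leLHS]/Num.norm /= mx_normrE; apply/bigmax_leP; split; first exact: norm_ge0.
move=> [i j] _ /=; rewrite (ord1 i) -sqrtr_sqr ler_wsqrtr //.
by rewrite /eucdot (bigD1 j) //= -expr2 lerDl sumr_ge0 // => k _; rewrite -expr2 sqr_ge0.
Qed.

Lemma entry_le_mxnorm n (v : 'rV[R]_n) j : `|v 0 j| <= `|v|.
Proof.
have /mapP[k Hk ->] : `|v 0 j| \in [seq `|v x.1 x.2| | x : 'I_1 * 'I_n].
  by apply/mapP; exists (0, j) => //=; rewrite mem_enum.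
by rewrite [leRHS]/Num.norm /= mx_normrE; apply/bigmax_geP; right => /=; exists k.
Qed.

Lemma sum_sq_aux (I : Type) (s : seq I) (a : I -> R) :
  0 <= \sum_(j <- s) `|a j| /\ \sum_(j <- s) a j * a j <= (\sum_(j <- s) `|a j|) ^+ 2.
Proof.
elim: s => [|j s [c0 IH]]; first by rewrite !big_nil expr0n /= lexx.
rewrite !big_cons.
have hj := real_normK (num_real (a j)); have a0 := normr_ge0 (a j).
split; first lra.
rewrite sqrrD -expr2 -hj.
have : 0 <= `|a j| * \sum_(j <- s) `|a j| by rewrite mulr_ge0.
lra.
Qed.

Lemma euc_le_sum n (v : 'rV[R]_n) : eucnorm v <= \sum_j `|v 0 j|.
Proof.
rewrite -[leRHS]ger0_norm ?sumr_ge0 // -sqrtr_sqr ler_wsqrtr //.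
exact: (sum_sq_aux _ (fun j => v 0 j)).2.
Qed.

Lemma setdist0_mem n S (y : 'rV[R]_n) : S !=set0 -> closed S -> setdist y S = 0 -> S y.
Proof.
move=> S0 cS hy; apply: cS => B /nbhs_ballP [e e0 hB].
have [s Ss hs] := setdist0_approx S0 hy e0.
exists s; split => //; apply: hB; rewrite -ball_normE /=.
exact: le_lt_trans (mxnorm_le_euc _) hs.
Qed.

End Dist.
Section Grad.
Variable R : realType.

Lemma grad_dot n (g : 'rV[R]_n -> R) x v : eucdot (grad g x) v = 'd g x v.
Proof.
rewrite {2}(row_sum_delta v) linear_sum /eucdot; apply: eq_bigr => j _.
by rewrite linearZ mxE /= mulrC.
Qed.

Lemma grad_ineq n (g : 'rV[R]_n -> R) x y : differentiable g x ->
  (forall (a b : 'rV[R]_n) (t : R), 0 <= t <= 1 ->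
     g (t *: a + (1 - t) *: b) <= t * g a + (1 - t) * g b) ->
  eucdot (grad g x) (y - x) <= g y - g x.
Proof.
move=> dg cvx; rewrite grad_dot -deriveE //.
have dv := @diff_derivable _ _ _ g x (y - x) dg.
rewrite /derive.
set q := (fun h : R => h^-1 *: ((g \o shift x) (h *: (y - x)) - g x)).
have sub : (0:R)^'+ `=>` (0:R)^'.
  move=> A; rewrite /at_right /dnbhs /within /= => hA; apply: (filterS _ hA) => t h1 tp.
  by apply: h1; exact: lt0r_neq0.
have cq : q @ 0^'+ --> lim (q @ 0^') := cvg_trans (cvg_app q sub) dv.
apply: (cvgr_to_le cq).
near=> h.
have h0 : 0 < h by near: h; exact: nbhs_right_gt.
have h1 : h < 1 by near: h; apply: nbhs_right_lt; exact: ltr01.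
rewrite /q /=.
have -> : h *: (y - x) + x = h *: y + (1 - h) *: x by apply/rowP => j; rewrite !mxE; ring.
have := cvx y x h; rewrite (ltW h0) (ltW h1) => /(_ isT) hc.
change (h^-1 * (g (h *: y + (1 - h) *: x) - g x) <= g y - g x).
rewrite mulrC ler_pdivrMr //.
lra.
Unshelve. all: by end_near.
Qed.
End Grad.
Section Cont.
Variable R : realType.

Lemma cont_bound n (g h : 'rV[R]_n -> R) xh :
  (forall y, `|g y - g xh| <= h y) -> h @ xh --> 0 -> {for xh, continuous g}.
Proof.
move=> hb hc; apply/(@cvgrPdist_le _ _ _ (nbhs xh) (nbhs_pfilter xh)) => e e0.
have := @cvgr_dist_le _ _ _ (nbhs xh) (nbhs_pfilter xh) _ _ hc _ e0.
apply: filterS => y; rewrite sub0r normrN distrC => hy.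
exact: le_trans (hb y) (le_trans (ler_norm _) hy).
Qed.

Lemma cont_scale n (g : 'rV[R]_n -> R) xh a b :
  {for xh, continuous g} -> {for xh, continuous (fun y => a * (g y - b))}.
Proof.
move=> gc; apply/(@cvgrPdist_le _ _ _ (nbhs xh) (nbhs_pfilter xh)) => e e0.
have a1 : 0 < `|a| + 1 by have := normr_ge0 a; lra.
have := @cvgr_dist_le _ _ _ (nbhs xh) (nbhs_pfilter xh) _ _ gc _ (divr_gt0 e0 a1).
apply: filterS => y hy.
rewrite -mulrBr opprB addrA subrK normrM.
apply: le_trans (_ : `|a| * (e / (`|a| + 1)) <= e).
  by rewrite ler_wpM2l.
rewrite mulrA ler_pdivrMr // mulrC ler_pM2l //; lra.
Qed.

Lemma cont_sq n (s : 'rV[R]_n -> R) xh :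
  {for xh, continuous s} -> {for xh, continuous (fun y => s y ^+ 2 / 2)}.
Proof.
move=> hs; have := @cvgMr_tmp _ _ (nbhs xh) (nbhs_pfilter xh) _ _ (2^-1) (@cvgM _ _ (nbhs xh) (nbhs_pfilter xh) _ _ _ _ hs hs).
have -> : (fun y => s y ^+ 2 / 2) = (fun y => (s \* s) y * 2^-1).
  by apply/funext => y; rewrite /= expr2.
by [].
Qed.

Lemma sum_cvg0 (T : Type) (F : set_system T) (FF : Filter F) (I : Type) (s : seq I)
  (g : I -> T -> R) : (forall i, g i @ F --> 0) -> (fun t => \sum_(i <- s) g i t) @ F --> 0.
Proof.
move=> hg; elim: s => [|i s IH].
  have -> : (fun t => \sum_(i <- [::]) g i t) = fun=> 0 by apply/funext=> t; rewrite big_nil.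
  exact: cvg_cst.
have -> : (fun t => \sum_(j <- i :: s) g j t) = (g i + fun t => \sum_(j <- s) g j t).
  by apply/funext=> t; rewrite big_cons.
rewrite -[X in _ --> X]addr0; exact: cvgD.
Qed.

Lemma cont_dist0 n (g : 'rV[R]_n -> R) xh :
  {for xh, continuous g} -> (fun y => `|g y - g xh|) @ xh --> 0.
Proof.
move=> gc; apply/(@cvgrPdist_le _ _ _ (nbhs xh) (nbhs_pfilter xh)) => e e0.
have := @cvgr_dist_le _ _ _ (nbhs xh) (nbhs_pfilter xh) _ _ gc _ e0; apply: filterS => y hy.
by rewrite sub0r normrN normr_id distrC.
Qed.

Lemma coord_cvg0 n (xh : 'rV[R]_n) j : (fun y : 'rV[R]_n => `|(y - xh) 0 j|) @ xh --> 0.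
Proof.
apply/(@cvgrPdist_le _ _ _ (nbhs xh) (nbhs_pfilter xh)) => e e0.
have := @cvgr_dist_le _ _ _ (nbhs xh) (nbhs_pfilter xh) id xh cvg_id _ e0.
apply: filterS => y hy; rewrite sub0r normrN normr_id.
have -> : (y - xh) 0 j = - ((xh - y) 0 j) by rewrite !mxE opprB.
rewrite normrN.
exact: le_trans (entry_le_mxnorm _ _) hy.
Qed.

Lemma cont_setdist n S xh : S !=set0 -> {for xh, continuous (fun y : 'rV[R]_n => setdist y S)}.
Proof.
move=> S0; apply: (@cont_bound _ _ (fun y => \sum_j `|(y - xh) 0 j|)).
  by move=> y; apply: le_trans (setdist_abs _ _ S0) (euc_le_sum _).
apply: (@sum_cvg0 _ (nbhs xh) (nbhs_pfilter xh)) => j.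
exact: coord_cvg0.
Qed.

Lemma cont_setdistF n m (f : 'I_m -> 'rV[R]_n -> R) S xh : S !=set0 ->
  (forall i, {for xh, continuous (f i)}) ->
  {for xh, continuous (fun y : 'rV[R]_n => setdist (Fvec f y) S)}.
Proof.
move=> S0 fc; apply: (@cont_bound _ _ (fun y => \sum_i `|f i y - f i xh|)).
  move=> y; apply: le_trans (setdist_abs _ _ S0) _.
  apply: le_trans (euc_le_sum _) _.
  by apply: ler_sum => i _; rewrite !mxE.
apply: (@sum_cvg0 _ (nbhs xh) (nbhs_pfilter xh)) => i.
exact: cont_dist0.
Qed.

Lemma cluster_le n (g : 'rV[R]_n -> R) (xs : nat -> 'rV[R]_n) (u : nat -> R) L xh :
  {for xh, continuous g} -> u @ \oo --> L -> (forall j, g (xs j) <= u j) ->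
  cluster (xs @ \oo) xh -> g xh <= L.
Proof.
move=> gc uc hu cl; rewrite leNgt; apply/negP => Lg.
set e := (g xh - L) / 2.
have e0 : 0 < e by rewrite divr_gt0 // subr_gt0.
have A1 : (xs @ \oo) [set z | exists2 j, u j < L + e & z = xs j].
  change (\forall j \near \oo, exists2 k, u k < L + e & xs j = xs k).
  have h := @cvgr_dist_lt _ _ _ \oo eventually_filter _ _ uc _ e0; apply: (filterS _ h) => j hj; exists j => //.
  move: hj; rewrite ltr_norml; lra.
have B1 : nbhs xh [set z | g xh - e < g z].
  have h := @cvgr_dist_lt _ _ _ (nbhs xh) (nbhs_pfilter xh) _ _ gc _ e0; apply: (filterS _ h) => z hz /=.
  move: hz; rewrite ltr_norml; lra.
have [z [[j hj ->] hz]] := cl _ _ A1 B1.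
have ee : g xh - e = L + e by rewrite /e; field.
have := hu j; move: hz => /= hz; lra.
Qed.
End Cont.
Section Seq.
Variable R : realType.

Lemma no_descent (D lam : nat -> R) (a : R) N : 0 < a -> (forall k, 0 <= D k) ->
  (forall k, (N <= k)%N -> D k.+1 <= D k - a * lam k + lam k ^+ 2) ->
  [series lam k]_k @ \oo --> +oo -> cvgn [series lam k ^+ 2]_k -> False.
Proof.
move=> a0 D0 hD hS hS2.
set Ss := [series lam k]_k; set Ss2 := [series lam k ^+ 2]_k.
have S2inc : nondecreasing_seq Ss2.
  by apply/nondecreasing_seqP => k; rewrite /Ss2 seriesSr lerDl sqr_ge0.
have hB k : Ss2 k <= limn Ss2 := nondecreasing_cvgn_le S2inc hS2 k.
have S200 : Ss2 0%N = 0 by rewrite /Ss2 /series /= big_geq.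
have S20 k : 0 <= Ss2 k by rewrite -S200; apply: S2inc.
have ind j : D (N + j)%N <= D N - a * (Ss (N + j)%N - Ss N) + (Ss2 (N + j)%N - Ss2 N).
  elim: j => [|j IH]; first by rewrite addn0 !subrr; lra.
  rewrite addnS /Ss /Ss2 !seriesSr -/Ss -/Ss2 /=.
  have := hD (N + j)%N (leq_addr _ _); nra.
set M := (D N + limn Ss2) / a.
have aM : a * M = D N + limn Ss2 by rewrite /M; field; rewrite gt_eqF.
have := proj1 (cvgryPge _) hS (Ss N + M + 1).
move=> [K _ hK].
have hK' := hK (N + K)%N (leq_addl _ _).
have h1 := ind K; have h2 := D0 (N + K)%N; have h3 := hB (N + K)%N; have h4 := S20 N.
have : a * (M + 1) <= a * (Ss (N + K)%N - Ss N).
  rewrite ler_pM2l //. have hK2 : Ss N + M + 1 <= Ss (N + K)%N := hK'. lra.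
nra.
Qed.

Lemma subseq_exists (Phi : nat -> R) (K : R) : (forall k, 0 <= Phi k) -> 0 <= K ->
  (forall c, K < c -> forall N, exists k, (N <= k)%N /\ Phi k <= c) ->
  exists (kj : nat -> nat) L, (forall j, (kj j < kj j.+1)%N) /\ 0 <= L <= K /\
    (Phi \o kj) @ \oo --> L.
Proof.
move=> P0 K0 freq.
set Sset := [set c | 0 <= c /\ forall N, exists k, (N <= k)%N /\ Phi k <= c].
have Sne : Sset !=set0.
  exists (K + 1); split; first lra.
  by apply: freq; lra.
have Slb : has_lbound Sset by exists 0 => c [].
set L := inf Sset.
have L0 : 0 <= L by apply: lb_le_inf => // c [].
have LK : L <= K.
  apply/ler_addgt0Pr => e e0; apply: (ge_inf Slb); split; first lra.
  by apply: freq; lra.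
have approx e N : 0 < e -> exists k, (N <= k)%N /\ `|Phi k - L| < e.
  move=> e0.
  have [N1 hN1] : exists N1, forall k, (N1 <= k)%N -> L - e < Phi k.
    have [Le|Le] := ltP (L - e) 0.
      by exists 0%N => k _; have := P0 k; lra.
    have [//|H] := pselect (exists N1, forall k, (N1 <= k)%N -> L - e < Phi k).
    have : Sset (L - e).
      split => // N2; apply: contra_notP H => nh; exists N2 => k hk.
      rewrite ltNge; apply/negP => hle; apply: nh; exists k; split => //.
    move/(ge_inf Slb); lra.
  have LL : L < L + e by lra.
  have [c [c0 hc] cL] := inf_lt Sne LL.
  have [k [hk1 hk2]] := hc (maxn N N1).
  exists k; split; first by apply: leq_trans hk1; rewrite leq_maxl.
  have := hN1 k (leq_trans (leq_maxr _ _) hk1).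
  rewrite ltr_norml; lra.
have step N (j : nat) : {k | (N <= k)%N /\ `|Phi k - L| < (j.+1%:R)^-1}.
  by apply: cid; apply: approx.
pose kj := fix kf (j : nat) : nat :=
  match j with 0 => proj1_sig (step 0%N 0%N) | j'.+1 => proj1_sig (step (kf j').+1 j'.+1) end.
have kjS j : (kj j < kj j.+1)%N.
  by rewrite /= ; case: (step (kj j).+1 j.+1) => k [].
have kjA j : `|Phi (kj j) - L| < (j.+1%:R)^-1.
  by case: j => [|j] /=; [case: (step 0%N 0%N) => k [] | case: (step (kj j).+1 j.+1) => k []].
exists kj, L; split => //; split; first by rewrite L0.
apply/cvgrPdist_lt => e e0.
near=> j; rewrite distrC /=.
apply: lt_trans (kjA j) _.
near: j; exact: (near_infty_natSinv_lt (PosNum e0)).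
Unshelve. all: by end_near.
Qed.
End Seq.

Lemma dot_delta (R : realType) n (u : 'rV[R]_n) i : eucdot u (delta_mx 0 i) = u 0 i.
Proof.
rewrite /eucdot (bigD1 i) //= big1 ?addr0 => [|j /negbTE ji]; rewrite mxE ?eqxx ?ji /=.
  by rewrite mulr1.
by rewrite mulr0.
Qed.

Lemma sqh (R : realType) (a : R) : a ^+ 2 / 2 = 0 -> a = 0.
Proof.
move=> h; have e2 : a ^+ 2 = (a ^+ 2 / 2) * 2 by field.
by rewrite h mul0r in e2; move/eqP: e2; rewrite expf_eq0 /= => /eqP.
Qed.

Unset Implicit Arguments.
Theorem theorem2 (R : realType) (n m : nat) (hn : (0 < n)%N) (hm : (0 < m)%N)
  (f : 'I_m -> 'rV[R]_n -> R) (C : set 'rV[R]_n) (Q : set 'rV[R]_m)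
  (r : 'I_m -> R)
  (hr_pos : forall i, 0 < r i) (hr_sum : \sum_(i < m) r i = 1)
  (* algorithm data *)
  (mu : R) (hmu : 0 < mu)
  (alpha beta gamma lambda : nat -> R)
  (x : nat -> 'rV[R]_n) (p : nat -> 'rV[R]_m) (PC : nat -> 'rV[R]_n)
  (istar : nat -> 'I_m)
  (hp : forall k, is_proj (Qplus Q) (Fvec f (x k)) (p k))
  (hPC : forall k, is_proj C (x k) (PC k))
  (histar : forall k i,
     r i * (f i (x k) - zstar f C i)
       <= r (istar k) * (f (istar k) (x k) - zstar f C (istar k)))
  (d : nat -> 'rV[R]_n)
  (hd : forall k, d k =
      (if 0 <= phi f C r (x k) - philb f C r then alpha k else 0)
          *: (r (istar k) *: grad (f (istar k)) (x k))
      + beta k *: (x k - PC k)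
      + gamma k *: JT f (x k) (Fvec f (x k) - p k))
  (hx : forall k, x k.+1 =
      x k - (lambda k / Num.max mu (eucnorm (d k))) *: d k)
  (* (A1) *)
  (A1 : forall i, C1 (f i))
  (* (A2) *)
  (A2C : C !=set0 /\ closed C /\ convex_set_rV C)
  (A2Q : Q !=set0 /\ closed Q /\ convex_set_rV Q)
  (A2z : forall i, has_lbound [set f i y | y in C])
  (* (A3) *)
  (A3 : forall i (y z : 'rV[R]_n) (t : R), 0 <= t <= 1 ->
          f i (t *: y + (1 - t) *: z) <= t * f i y + (1 - t) * f i z)
  (* (A4) *)
  (A4 : Omega f C Q r !=set0)
  (* (A5) *)
  (A5pos : forall k, 0 < lambda k)
  (A5div : [series lambda k]_k @ \oo --> +oo)
  (A5sq : cvgn [series lambda k ^+ 2]_k)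
  (* (A6) *)
  (alo ahi blo bhi glo ghi : R)
  (hal : 0 < alo) (hah : alo <= ahi) (hbl : 0 < blo) (hbh : blo <= bhi)
  (hgl : 0 < glo) (hgh : glo <= ghi)
  (A6 : forall k, [/\ alo <= alpha k <= ahi, blo <= beta k <= bhi
                    & glo <= gamma k <= ghi])
  (* (A7') *)
  (eps0 : R) (heps0 : 0 <= eps0)
  (A7 : phistar f C Q r - philb f C r <= eps0)
  (* (A8) *)
  (B : R) (A8 : forall k, eucnorm (x k) <= B)
  (* uniform bound on the directions *)
  (Mbar : R) (hM : forall k, eucnorm (d k) <= Mbar) :
  let Cstar := ahi * Num.max mu Mbar / mu in
  let Phi k := alpha k * Num.max (phi f C r (x k) - philb f C r) 0
               + beta k * Hf C (x k) + gamma k * Gf f Q (x k) in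
  exists (kj : nat -> nat) (lstar : R),
    (forall j, (kj j < kj j.+1)%N) /\
    0 <= lstar <= Cstar * eps0 /\
    (Phi \o kj) @ \oo --> lstar /\
    forall xhat, cluster ((x \o kj) @ \oo) xhat ->
      [/\ (Hf C xhat <= lstar / blo /\ lstar / blo <= Cstar * eps0 / blo
           /\ setdist xhat C <= Num.sqrt (2 * Cstar * eps0 / blo)),
          (Gf f Q xhat <= lstar / glo /\ lstar / glo <= Cstar * eps0 / glo
           /\ setdist (Fvec f xhat) (Qplus Q) <= Num.sqrt (2 * Cstar * eps0 / glo)),
          (phi f C r xhat <= philb f C r + lstar / alo
           /\ philb f C r + lstar / alo <= phistar f C Q r + Cstar * eps0 / alo)
        & (eps0 = 0 -> lstar = 0 /\ Omega f C Q r xhat)].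
Proof.
move=> Cstar Phi.
have [C0 [Ccl Ccv]] := A2C.
have [Q0 [Qcl Qcv]] := A2Q.
have Qp0 : Qplus Q !=set0.
  case: Q0 => y Qy; exists y; exists y, 0; split => //; split => [i|]; rewrite ?mxE ?subr0 //.
have Qpcv : convex_set_rV (Qplus Q).
  move=> a b t [ya [ua [Qya [ua0 ->]]]] [yb [ub [Qyb [ub0 ->]]]] t01.
  exists (t *: ya + (1 - t) *: yb), (t *: ua + (1 - t) *: ub); split; first exact: Qcv.
  split; last by apply/rowP => j; rewrite !mxE; ring.
  move=> i; rewrite !mxE; have := ua0 i; have := ub0 i; case/andP: t01 => t0 t1 ha hb.
  by apply: addr_ge0; apply: mulr_ge0 => //; lra.
have fd i y : differentiable (f i) y := (A1 i).1 y.
have fc i y : {for y, continuous (f i)} := differentiable_continuous (fd i y).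
have phi_ub y i : r i * (f i y - zstar f C i) <= phi f C r y.
  apply: ub_le_sup; last by exists i.
  exists (\sum_j `|r j * (f j y - zstar f C j)|) => _ [j _ <-].
  apply: le_trans (ler_norm _) _.
  by rewrite (bigD1 j) //= lerDl sumr_ge0 // => k _.
have phi_le y i0 : (forall i, r i * (f i y - zstar f C i) <= r i0 * (f i0 y - zstar f C i0)) ->
    phi f C r y <= r i0 * (f i0 y - zstar f C i0).
  move=> h; apply: ge_sup; first by exists (r i0 * (f i0 y - zstar f C i0)), i0.
  by move=> _ [i _ <-]; exact: h.
have zle i y : C y -> zstar f C i <= f i y.
  by move=> Cy; apply: (ge_inf (A2z i)); exists y.
have phi0 y : C y -> 0 <= phi f C r y.
  move=> Cy; apply: le_trans (phi_ub y (istar 0%N)).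
  by apply: mulr_ge0; [exact: ltW | rewrite subr_ge0; exact: zle].
have HfC s : Hf C s = 0 -> C s.
  move=> h; apply: (setdist0_mem C0 Ccl). move: h; rewrite /Hf.  exact: sqh.
have Hf0 s : 0 <= Hf C s by rewrite /Hf; apply: divr_ge0 => //; exact: sqr_ge0.
have Gf0 s : 0 <= Gf f Q s by rewrite /Gf; apply: divr_ge0 => //; exact: sqr_ge0.
have lbC : has_lbound [set phi f C r y | y in C] by exists 0 => _ [y Cy <-]; exact: phi0.
have lbS : has_lbound [set phi f C r y | y in Sfeas f C Q].
  by exists 0 => _ [y [h1 _] <-]; apply: phi0; exact: HfC.
have [xs [[xsH xsG] xsphi]] := A4.
have lbst : philb f C r <= phistar f C Q r.
  apply: lb_le_inf; first by exists (phi f C r xs), xs.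
  by move=> _ [y [h1 _] <-]; apply: (ge_inf lbC); exists y => //; exact: HfC.
have stle y : Sfeas f C Q y -> phistar f C Q r <= phi f C r y.
  by move=> h; apply: (ge_inf lbS); exists y.
have xsC0 : setdist xs C = 0 := sqh (a:=setdist xs C) xsH.
have xsQ0 : setdist (Fvec f xs) (Qplus Q) = 0 := sqh (a:=setdist (Fvec f xs) (Qplus Q)) xsG.
have ahi0 : 0 <= ahi by lra.
have key k : Phi k - ahi * eps0 <= eucdot (d k) (x k - xs).
  have [/andP[al1 al2] /andP[bl1 bl2] /andP[gl1 gl2]] := A6 k.
  have T1 : phi f C r (x k) - phistar f C Q r
      <= eucdot (r (istar k) *: grad (f (istar k)) (x k)) (x k - xs).
    rewrite dotZl.
    have g := grad_ineq xs (fd (istar k) (x k)) (A3 (istar k)).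
    have -> : x k - xs = (-1) *: (xs - x k) by apply/rowP => j; rewrite !mxE; ring.
    rewrite dotZr.
    have h1 := phi_le (x k) (istar k) (histar k).
    have h2 := phi_ub xs (istar k).
    rewrite xsphi in h2.
    have rp := hr_pos (istar k).
    nra.
  have T2 : Hf C (x k) <= eucdot (x k - PC k) (x k - xs).
    have vi := proj_VI_cl Ccv (hPC k) xsC0.
    have -> : x k - xs = (x k - PC k) - (xs - PC k) by apply/rowP => j; rewrite !mxE; ring.
    rewrite dotBr /Hf (setdist_proj (hPC k)) normE.
    have := dot_ge0 (x k - PC k); lra.
  set rho := Fvec f (x k) - p k.
  have rho0 i : 0 <= rho 0 i.
    have Pm : Qplus Q (p k - delta_mx 0 i).
      case: (hp k) => [[y [u [Qy [u0 ->]]]] _]; exists y, (u + delta_mx 0 i); split => //; split.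
        by move=> j; rewrite !mxE; apply: addr_ge0 => //; exact: ler0n.
      by rewrite opprD addrA.
    have := proj_VI Qpcv (hp k) Pm.
    have -> : p k - delta_mx 0 i - p k = (-1) *: delta_mx 0 i by apply/rowP => j; rewrite !mxE; ring.
    rewrite dotZr dot_delta -/rho; lra.
  have T3 : Gf f Q (x k) <= eucdot (JT f (x k) rho) (x k - xs).
    rewrite /JT dot_suml.
    have st : \sum_i rho 0 i * (f i (x k) - f i xs)
        <= \sum_i eucdot (rho 0 i *: grad (f i) (x k)) (x k - xs).
      apply: ler_sum => i _; rewrite dotZl; apply: (ler_wpM2l (rho0 i)).
      have g := grad_ineq xs (fd i (x k)) (A3 i).
      have -> : x k - xs = (-1) *: (xs - x k) by apply/rowP => j; rewrite !mxE; ring.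
      rewrite dotZr; lra.
    have eq : \sum_i rho 0 i * (f i (x k) - f i xs) = eucdot rho (Fvec f (x k) - Fvec f xs).
      by rewrite /eucdot; apply: eq_bigr => i _; rewrite !mxE.
    have vi := proj_VI_cl Qpcv (hp k) xsQ0.
    have e2 : Fvec f (x k) - Fvec f xs = rho - (Fvec f xs - p k)
      by apply/rowP => j; rewrite !mxE; ring.
    rewrite e2 dotBr -/rho in eq.
    rewrite -/rho in vi.
    have hG : Gf f Q (x k) = eucdot rho rho / 2.
      by rewrite /Gf (setdist_proj (hp k)) normE.
    have := dot_ge0 rho; lra.
  rewrite hd !dotDl !dotZl /Phi.
  have sg0 : 0 <= phistar f C Q r - philb f C r by lra.
  have a2 : alpha k * (phistar f C Q r - philb f C r) <= ahi * eps0.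
    by apply: ler_pM => //; lra.
  have b1 : beta k * Hf C (x k) <= beta k * eucdot (x k - PC k) (x k - xs).
    by apply: ler_wpM2l => //; lra.
  have c1 : gamma k * Gf f Q (x k) <= gamma k * eucdot (JT f (x k) rho) (x k - xs).
    by apply: ler_wpM2l => //; lra.
  have ae0 : 0 <= ahi * eps0 by apply: mulr_ge0.
  case: ifP => hD.
    rewrite (max_idPl hD).
    have a1 : alpha k * (phi f C r (x k) - phistar f C Q r) <= alpha k *
        eucdot (r (istar k) *: grad (f (istar k)) (x k)) (x k - xs).
      by apply: ler_wpM2l => //; lra.
    have ea : alpha k * (phi f C r (x k) - philb f C r) = alpha k * (phi f C r (x k) - phistar f C Q r)
       + alpha k * (phistar f C Q r - philb f C r) by ring.
    rewrite dotZl in a1; rewrite -/rho; lra.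
  have hD' : phi f C r (x k) - philb f C r <= 0 by move/negbT: hD; rewrite -ltNge => /ltW.
  rewrite (max_idPr hD') !mul0r mulr0 -/rho.
  lra.
have Phi0 k : 0 <= Phi k.
  have [/andP[al1 al2] /andP[bl1 bl2] /andP[gl1 gl2]] := A6 k.
  rewrite /Phi; apply: addr_ge0; [apply: addr_ge0|]; apply: mulr_ge0; rewrite ?le_max ?lexx ?orbT //; lra.
have eb0 : 0 < Num.max mu Mbar by rewrite lt_max hmu.
have Dstep k : eucdot (x k.+1 - xs) (x k.+1 - xs) =
    eucdot (x k - xs) (x k - xs)
    - 2 * (lambda k / Num.max mu (eucnorm (d k))) * eucdot (x k - xs) (d k)
    + (lambda k / Num.max mu (eucnorm (d k))) ^+ 2 * eucdot (d k) (d k).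
  rewrite hx -dot_expand; congr eucdot; apply/rowP => j; rewrite !mxE; ring.
have freq c : ahi * eps0 < c -> forall N, exists k, (N <= k)%N /\ Phi k <= c.
  move=> hc N.
  have [//|nh] := pselect (exists k, (N <= k)%N /\ Phi k <= c).
  exfalso.
  have big k : (N <= k)%N -> c < Phi k.
    by move=> hk; rewrite ltNge; apply/negP => hle; apply: nh; exists k.
  set eb := Num.max mu Mbar.
  set dl := c - ahi * eps0.
  have dl0 : 0 < dl by rewrite /dl; lra.
  apply: (@no_descent _ (fun k => eucdot (x k - xs) (x k - xs)) lambda (2 * dl / eb) N) => //.
  - by rewrite divr_gt0 // mulr_gt0.
  - by move=> k; exact: dot_ge0.
  move=> k hk /=; rewrite Dstep.
  set et := Num.max mu (eucnorm (d k)).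
  have et0 : 0 < et by rewrite lt_max hmu.
  have etd : eucnorm (d k) <= et by rewrite le_max lexx orbT.
  have eteb : et <= eb by rewrite ge_max !le_max lexx hM orbT.
  have lk := A5pos k.
  set t := lambda k / et.
  have t0 : 0 <= t by rewrite divr_ge0 // ltW.
  have tl : lambda k / eb <= t by rewrite /t ler_pM2l // lef_pV2 // posrE.
  have kk := key k; have bk := big k hk.
  have tdl : lambda k / eb * dl <= t * eucdot (x k - xs) (d k).
    rewrite dotC; apply: ler_pM => //; first by rewrite divr_ge0 // ltW.
      by apply: ltW.
    rewrite /dl; lra.
  have td : t * eucnorm (d k) <= lambda k.
    by rewrite /t mulrAC ler_pdivrMr // ler_pM2l.
  have tdd : t ^+ 2 * eucdot (d k) (d k) <= lambda k ^+ 2.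
    have tn0 : 0 <= t * eucnorm (d k) by rewrite mulr_ge0 ?norm_ge0.
    by rewrite -normE -exprMn !expr2; apply: ler_pM.
  have e1 : 2 * dl / eb * lambda k = 2 * (lambda k / eb * dl) by ring.
  rewrite e1; lra.
have ae0 : 0 <= ahi * eps0 by apply: mulr_ge0.
have [kj [L [kjS [/andP[L0 LK] cvL]]]] := subseq_exists Phi0 ae0 freq.
have q1 : 1 <= Num.max mu Mbar / mu by rewrite ler_pdivlMr // mul1r le_max lexx.
have cs : ahi * eps0 <= Cstar * eps0.
  have e : Cstar * eps0 = (ahi * eps0) * (Num.max mu Mbar / mu) by rewrite /Cstar; ring.
  by rewrite e -[X in X <= _]mulr1; apply: ler_wpM2l.
have LC : L <= Cstar * eps0 := le_trans LK cs.
have hPb k : [/\ alo * Num.max (phi f C r (x k) - philb f C r) 0 <= Phi k,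
    blo * Hf C (x k) <= Phi k & glo * Gf f Q (x k) <= Phi k].
  have [/andP[al1 al2] /andP[bl1 bl2] /andP[gl1 gl2]] := A6 k.
  have m0 : 0 <= Num.max (phi f C r (x k) - philb f C r) 0 by rewrite le_max lexx orbT.
  have h1 : alo * Num.max (phi f C r (x k) - philb f C r) 0 <= alpha k * Num.max (phi f C r (x k) - philb f C r) 0 by apply: ler_wpM2r.
  have h2 : blo * Hf C (x k) <= beta k * Hf C (x k) by apply: ler_wpM2r.
  have h3 : glo * Gf f Q (x k) <= gamma k * Gf f Q (x k) by apply: ler_wpM2r.
  have := Hf0 (x k); have := Gf0 (x k).
  have : 0 <= alpha k * Num.max (phi f C r (x k) - philb f C r) 0 by apply: mulr_ge0 => //; lra.
  have : 0 <= beta k * Hf C (x k) by apply: mulr_ge0 => //; lra.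
  have : 0 <= gamma k * Gf f Q (x k) by apply: mulr_ge0 => //; lra.
  rewrite /Phi; move=> *; split; lra.
exists kj, L; split => //; split; first by rewrite L0.
split => // xhat cl.
have hH : Hf C xhat <= L / blo.
  apply: (@cluster_le _ _ (Hf C) (x \o kj) (fun j => Phi (kj j) / blo) _ xhat _ _ _ cl).
  - rewrite /Hf; exact: (cont_sq (cont_setdist C0)).
  - exact: cvgMr_tmp.
  - move=> j /=; rewrite ler_pdivlMr // mulrC; by case: (hPb (kj j)).
have hG : Gf f Q xhat <= L / glo.
  apply: (@cluster_le _ _ (Gf f Q) (x \o kj) (fun j => Phi (kj j) / glo) _ xhat _ _ _ cl).
  - rewrite /Gf; exact: (cont_sq (cont_setdistF Qp0 (fun i => fc i xhat))).
  - exact: cvgMr_tmp.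
  - move=> j /=; rewrite ler_pdivlMr // mulrC; by case: (hPb (kj j)).
have hP : phi f C r xhat <= philb f C r + L / alo.
  apply: ge_sup; first by exists (r (istar 0%N) * (f (istar 0%N) xhat - zstar f C (istar 0%N))), (istar 0%N).
  move=> _ [i _ <-].
  have cu := cvgD (cvg_cst (philb f C r)) (@cvgMr_tmp _ _ _ eventually_filter _ _ (alo^-1) cvL).
  apply: (@cluster_le _ _ (fun y => r i * (f i y - zstar f C i)) (x \o kj) (fun j => philb f C r + Phi (kj j) / alo) (philb f C r + L / alo) xhat (cont_scale (fc i xhat)) _ _ cl); first exact: cu.
  move=> j /=.
  apply: le_trans (phi_ub _ i) _.
  have [h1 _ _] := hPb (kj j).
  have : Num.max (phi f C r (x (kj j)) - philb f C r) 0 <= Phi (kj j) / alo.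
    by rewrite ler_pdivlMr // mulrC.
  have : phi f C r (x (kj j)) - philb f C r <= Num.max (phi f C r (x (kj j)) - philb f C r) 0.
    by rewrite le_max lexx.
  lra.
have Lb0 : 0 <= L / blo by rewrite divr_ge0 // ltW.
have sqb (s K0 : R) (b : R) : 0 < b -> 0 <= s -> s ^+ 2 / 2 <= K0 / b -> s <= Num.sqrt (2 * K0 / b).
  move=> b0 s0 h; rewrite -(ger0_norm s0) -sqrtr_sqr ler_wsqrtr //.
  have e : 2 * K0 / b = 2 * (K0 / b) by rewrite mulrA.
  rewrite e; lra.
split.
- split; first exact: hH.
  split; first by apply: ler_wpM2r; [rewrite invr_ge0 ltW | exact: LC].
  have -> : 2 * Cstar * eps0 / blo = 2 * (Cstar * eps0) / blo by rewrite mulrA.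
  apply: sqb => //; first exact: setdist_ge0.
  by apply: le_trans hH _; apply: ler_wpM2r; [rewrite invr_ge0 ltW | exact: LC].
- split; first exact: hG.
  split; first by apply: ler_wpM2r; [rewrite invr_ge0 ltW | exact: LC].
  have -> : 2 * Cstar * eps0 / glo = 2 * (Cstar * eps0) / glo by rewrite mulrA.
  apply: sqb => //; first exact: setdist_ge0.
  by apply: le_trans hG _; apply: ler_wpM2r; [rewrite invr_ge0 ltW | exact: LC].
- split => //.
  have : L / alo <= Cstar * eps0 / alo by apply: ler_wpM2r; [rewrite invr_ge0 ltW | exact: LC].
  lra.
move=> e0.
have L00 : L = 0 by apply/le_anti; rewrite L0 andbT; move: LC; rewrite e0 mulr0.
split => //.
have Hx0 : Hf C xhat = 0 by apply/le_anti; rewrite Hf0 andbT; move: hH; rewrite L00 mul0r.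
have Gx0 : Gf f Q xhat = 0 by apply/le_anti; rewrite Gf0 andbT; move: hG; rewrite L00 mul0r.
have Sx : Sfeas f C Q xhat by split.
split => //.
apply/le_anti; rewrite stle // andbT.
move: hP; rewrite L00 mul0r addr0 => hP; exact: le_trans hP lbst.
Qed.
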